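(* Let $A=(-1,0)$ and $B=(1,0)$. For $x\in\mathbb{R}^2$ with $|x|=r>1$, define $P^2(x)$ by two steps on the origin-centered circle of radius $r$. First, $y$ is the second intersection point of the line $xA$ with this circle. Then $P^2(x)$ is the second intersection point of the line $yB$ with this circle. Let $\varphi_1$ be the time-$1$ flow of the vector field $Y=-\frac{4\sin\alpha}{r}\frac{\partial}{\partial\alpha}$, written in polar coordinates $(\alpha,r)$. Then there exist constants $R$ and $C_5$ such that $$|P^2(x)-\varphi_1(x)|\le\frac{C_5}{|x|}$$ for all $x$ with $|x|\ge R$.
   Context: The vector $\partial/\partial\alpha$ at a point at distance $r$ from the origin has Euclidean length $r$. *)

(* Defs.v *)
From Stdlib Require Import Reals Lra.
Open Scope R_scope.

Definition pt := (R * R)%type.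

Definition padd (p q : pt) : pt := (fst p + fst q, snd p + snd q).
Definition psub (p q : pt) : pt := (fst p - fst q, snd p - snd q).
Definition pscal (a : R) (p : pt) : pt := (a * fst p, a * snd p).
Definition pdot (p q : pt) : R := fst p * fst q + snd p * snd q.
Definition pnorm (p : pt) : R := sqrt (pdot p p).

Definition ptA : pt := (-1, 0).
Definition ptB : pt := (1, 0).

(* Second intersection point of the line through x and p with the
   origin-centred circle of radius |x| (which contains x).  Writing the line
   as x + t (p - x), the condition |x + t (p - x)|^2 = |x|^2 has the roots
   t = 0 (the point x) and t = -2 <x, p - x> / |p - x|^2 (the second point). *)
Definition second_intersection (x p : pt) : pt :=
  let d := psub p x in
  padd x (pscal (-2 * pdot x d / pdot d d) d).

Definition P2 (x : pt) : pt :=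
  second_intersection (second_intersection x ptA) ptB.

(* Coordinate vector field d/dalpha of polar coordinates (alpha, r) at p:
   p = (r cos a, r sin a) gives d/dalpha = (-r sin a, r cos a) = (-p2, p1),
   of Euclidean length r. *)
Definition d_alpha (p : pt) : pt := (- snd p, fst p).

(* Y = - (4 sin alpha / r) d/dalpha, with r = |p| and sin alpha = p2 / r. *)
Definition Yfield (p : pt) : pt :=
  let r := pnorm p in pscal (- (4 * (snd p / r)) / r) (d_alpha p).

Definition integral_curve (V : pt -> pt) (g1 g2 : R -> R) : Prop :=
  forall t : R,
    derivable_pt_lim g1 t (fst (V (g1 t, g2 t))) /\
    derivable_pt_lim g2 t (snd (V (g1 t, g2 t))).

(* Main.v *)
Require Import Defs.
From Stdlib Require Import Reals Lra Psatz.
Open Scope R_scope.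

Lemma stepA (k c d : R) : 10 <= k -> c^2 + d^2 = 1 ->
  second_intersection (k*c, k*d) ptA =
  (k * (-(c + 2*/k + c*(/k)^2) / (1 + 2*c*/k + (/k)^2)),
   k * (((/k)^2 - 1) * d / (1 + 2*c*/k + (/k)^2))).
Proof.
  intros Hk H.
  unfold second_intersection, padd, pscal, psub, pdot, ptA; simpl.
  assert (e1 : k*c*(-1-k*c) + k*d*(0-k*d) = -k*c - k^2).
  { transitivity (-k*c - k^2*(c^2+d^2)); [ring | rewrite H; ring]. }
  assert (e2 : (-1-k*c)*(-1-k*c) + (0-k*d)*(0-k*d) = 1 + 2*k*c + k^2).
  { transitivity (1 + 2*k*c + k^2*(c^2+d^2)); [ring | rewrite H; ring]. }
  rewrite e1, e2.
  assert (hc : -1 <= c <= 1) by nra.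
  assert (n1 : 1 + 2*k*c + k^2 <> 0) by nra.
  assert (n2 : 1 + 2*c*/k + (/k)^2 <> 0).
  { intro E. apply n1. replace (1 + 2*k*c + k^2) with (k^2 * (1 + 2*c*/k + (/k)^2)) by (field; lra).
    rewrite E; ring. }
  f_equal; field; split; lra.
Qed.
Lemma stepB (k p q : R) : 10 <= k -> p^2 + q^2 = 1 ->
  second_intersection (k*p, k*q) ptB =
  (k * ((2*/k - p*(1+(/k)^2)) / (1 - 2*p*/k + (/k)^2)),
   k * (((/k)^2 - 1) * q / (1 - 2*p*/k + (/k)^2))).
Proof.
  intros Hk H.
  unfold second_intersection, padd, pscal, psub, pdot, ptB; simpl.
  assert (e1 : k*p*(1-k*p) + k*q*(0-k*q) = k*p - k^2).
  { transitivity (k*p - k^2*(p^2+q^2)); [ring | rewrite H; ring]. }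
  assert (e2 : (1-k*p)*(1-k*p) + (0-k*q)*(0-k*q) = 1 - 2*k*p + k^2).
  { transitivity (1 - 2*k*p + k^2*(p^2+q^2)); [ring | rewrite H; ring]. }
  rewrite e1, e2.
  assert (hc : -1 <= p <= 1) by nra.
  assert (n1 : 1 - 2*k*p + k^2 <> 0) by nra.
  assert (n2 : 1 - 2*p*/k + (/k)^2 <> 0).
  { intro E. apply n1. replace (1 - 2*k*p + k^2) with (k^2 * (1 - 2*p*/k + (/k)^2)) by (field; lra).
    rewrite E; ring. }
  f_equal; field; split; lra.
Qed.

Lemma fin_bound (h E bb : R) : 0 < h -> 1/2 <= bb -> Rabs E <= 27 -> Rabs (h * (E / bb)) <= 54 / / h.
Proof.
  intros hp hb hE.
  unfold Rdiv. rewrite Rinv_inv, !Rabs_mult, Rabs_inv, (Rabs_right h), (Rabs_right bb) by lra.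
  assert (hi : /bb * bb = 1) by (field; lra).
  assert (0 < /bb) by (apply Rinv_0_lt_compat; lra).
  assert (/bb <= 2) by nra.
  assert (0 <= Rabs E) by apply Rabs_pos.
  assert (Rabs E * /bb <= 54) by nra.
  nra.
Qed.

Lemma P2_bound (k u v : R) : 10 <= k -> u^2 + v^2 = 1 ->
  Rabs (fst (P2 (k*u, k*v)) - (k*u + 4*v^2)) <= 54 / k /\
  Rabs (snd (P2 (k*u, k*v)) - (k*v - 4*u*v)) <= 54 / k.
Proof.
  intros Hk H.
  unfold P2. rewrite stepA by assumption.
  set (h := /k).
  assert (hk : k * h = 1) by (unfold h; field; lra).
  clearbody h.
  assert (hp : 0 < h) by nra.
  assert (hb : h <= 1/10) by nra.
  assert (Kh : k = /h) by (apply (Rmult_eq_reg_r h); [rewrite Rinv_l; lra | lra]).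
  assert (hu : -1 <= u <= 1) by nra.
  assert (hv : -1 <= v <= 1) by nra.
  set (a := 1 + 2*u*h + h^2).
  assert (ha : 4/5 <= a) by (unfold a; nra).
  set (p := -(u + 2*h + u*h^2) / a).
  set (q := (h^2 - 1) * v / a).
  assert (pq : p^2 + q^2 = 1).
  { unfold p, q.
    replace (((h^2-1)*v/a)^2) with ((h^2-1)^2 * v^2 / a^2) by (field; lra).
    replace (v^2) with (1 - u^2) by lra.
    unfold a; field. fold a. lra. }
  rewrite stepB by assumption.
  cbn [fst snd]. rewrite Kh, Rinv_inv.
  set (bb := 1 + 6*h^2 + h^4 + 4*u*h + 4*u*h^3).
  assert (hbb : 1/2 <= bb).
  { unfold bb. assert (0 <= (u+1)*h) by nra. assert (0 <= (u+1)*h^3) by (apply Rmult_le_pos; [lra| apply pow_le; lra]).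
    assert (h^3 <= 1/1000) by (simpl; nra). nra. }
  assert (hb2 : 1 - 2*p*h + h^2 = bb / a).
  { unfold p, bb, a; field. fold a; lra. }
  rewrite hb2.
  replace (v^2) with (1 - u^2) by lra.
  split.
  - replace (/h * ((2 * h - p * (1 + h ^ 2)) / (bb / a)) - (/h * u + 4 * (1 - u ^ 2)))
      with (h * ((-4*(1-u^2)*(4*u*(1+h^2) + h*(5+h^2))) / bb)).
    2:{ unfold p, bb, a. field. fold a; fold bb. split; lra. }
    apply fin_bound; [lra|lra|].
    rewrite !Rabs_mult.
    assert (Rabs (-4) = 4) by (rewrite Rabs_left; lra). rewrite H0.
    assert (Rabs (1 - u^2) <= 1) by (apply Rabs_le; nra).
    assert (Rabs (4*u*(1+h^2) + h*(5+h^2)) <= 5).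
    { apply Rabs_le. assert (h^2 <= 1/100) by nra. assert (-h^2 <= u*h^2 <= h^2) by nra. nra. }
    assert (0 <= Rabs (1-u^2)) by apply Rabs_pos.
    assert (0 <= Rabs (4*u*(1+h^2) + h*(5+h^2))) by apply Rabs_pos.
    nra.
  - replace (/h * ((h^2 - 1) * q / (bb / a)) - (/h * v - 4 * u * v))
      with (h * (v * (-8 + 16*u^2 + 16*u^2*h^2 + 20*u*h + 4*u*h^3) / bb)).
    2:{ unfold q, bb, a. field. fold a; fold bb. split; lra. }
    apply fin_bound; [lra|lra|].
    rewrite Rabs_mult.
    assert (Rabs v <= 1) by (apply Rabs_le; lra).
    assert (Rabs (-8 + 16*u^2 + 16*u^2*h^2 + 20*u*h + 4*u*h^3) <= 27).
    { apply Rabs_le. assert (h^3 <= 1/1000) by (simpl; nra). assert (0<= u^2 <= 1) by nra.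
      assert (-h^3 <= u*h^3 <= h^3) by (assert (0 <= h^3) by (apply pow_le; lra); nra). nra. }
    assert (0 <= Rabs v) by apply Rabs_pos.
    assert (0 <= Rabs (-8 + 16*u^2 + 16*u^2*h^2 + 20*u*h + 4*u*h^3)) by apply Rabs_pos.
    nra.
Qed.

Lemma mvt_bound (f f' : R -> R) (a b M : R) :
  (forall t, derivable_pt_lim f t (f' t)) -> a < b ->
  (forall t, a <= t <= b -> Rabs (f' t) <= M) ->
  Rabs (f b - f a) <= M * (b - a).
Proof.
  intros Hd Hab HM.
  pose (pr := fun t => exist (fun l => derivable_pt_abs f t l) (f' t) (Hd t) : derivable_pt f t).
  destruct (MVT_cor1 f a b pr Hab) as [c [Hc1 Hc2]].
  rewrite Hc1. simpl. rewrite Rabs_mult, (Rabs_right (b-a)) by lra.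
  apply Rmult_le_compat_r; [lra|]. apply HM; lra.
Qed.

Lemma Y_fst (p : pt) : fst (Yfield p) = (-(4*(snd p/pnorm p))/pnorm p) * (- snd p).
Proof. reflexivity. Qed.
Lemma Y_snd (p : pt) : snd (Yfield p) = (-(4*(snd p/pnorm p))/pnorm p) * (fst p).
Proof. reflexivity. Qed.

Lemma lin_deriv (c t : R) : derivable_pt_lim (fun s => s * c) t c.
Proof.
  pose proof (derivable_pt_lim_mult id (fct_cte c) t 1 0 (derivable_pt_lim_id t) (derivable_pt_lim_const c t)) as D.
  unfold mult_fct, id, fct_cte in D. replace (1 * c + t * 0) with c in D by ring. exact D.
Qed.

Lemma div_sq1 (X K r : R) : 0 < r -> Rabs X <= K * r^2 -> Rabs (X / r^2) <= K.
Proof.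
  intros hr hX. unfold Rdiv. rewrite Rabs_mult, Rabs_inv, (Rabs_right (r^2)) by (apply Rle_ge, pow_le; lra).
  assert (0 < r^2) by (apply pow_lt; lra).
  apply (Rmult_le_reg_r (r^2)); [lra|]. rewrite Rmult_assoc, Rinv_l by lra. lra.
Qed.

Lemma div_sq2 (X K r : R) : 0 < r -> Rabs X <= K * r -> Rabs (X / r^2) <= K / r.
Proof.
  intros hr hX. replace (K / r) with (K / r * 1) by ring.
  assert (Rabs X <= (K/r) * r^2). { replace (K / r * r^2) with (K * r) by (field; lra). exact hX. }
  rewrite Rmult_1_r. apply div_sq1; assumption.
Qed.

Lemma flow_bound (x1 x2 : R) (g1 g2 : R -> R) :
  1 <= pnorm (x1, x2) -> g1 0 = x1 -> g2 0 = x2 -> integral_curve Yfield g1 g2 ->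
  Rabs (g1 1 - (x1 + 4 * x2^2 / (pnorm (x1,x2))^2)) <= 16 / pnorm (x1,x2) /\
  Rabs (g2 1 - (x2 - 4 * x1 * x2 / (pnorm (x1,x2))^2)) <= 24 / pnorm (x1,x2).
Proof.
  intros Hr H1 H2 Hic.
  set (r := pnorm (x1, x2)) in *.
  assert (Hr2 : r * r = x1*x1 + x2*x2).
  { unfold r, pnorm, pdot; simpl. apply sqrt_sqrt. nra. }
  assert (DN : forall t, derivable_pt_lim (fun t => g1 t * g1 t + g2 t * g2 t) t 0).
  { intro t. destruct (Hic t) as [d1 d2].
    pose proof (derivable_pt_lim_plus _ _ _ _ _ (derivable_pt_lim_mult _ _ _ _ _ d1 d1)
                  (derivable_pt_lim_mult _ _ _ _ _ d2 d2)) as D.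
    rewrite Y_fst, Y_snd in D. cbn [fst snd] in D.
    match type of D with derivable_pt_lim _ _ ?v => replace v with 0 in D by ring end.
    exact D. }
  assert (NC : forall t, 0 <= t <= 1 -> g1 t * g1 t + g2 t * g2 t = r * r).
  { intros t Ht. rewrite Hr2, <- H1, <- H2.
    destruct (Req_dec t 0) as [->|Ht0]; [reflexivity|].
    pose proof (mvt_bound _ (fun _ => 0) 0 t 0 DN ltac:(lra) ltac:(intros; cbv beta; rewrite Rabs_R0; lra)) as B.
    cbv beta in B. rewrite Rmult_0_l in B.
    pose proof (Rabs_pos (g1 t * g1 t + g2 t * g2 t - (g1 0 * g1 0 + g2 0 * g2 0))).
    assert (E : Rabs (g1 t * g1 t + g2 t * g2 t - (g1 0 * g1 0 + g2 0 * g2 0)) = 0) by lra.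
    destruct (Rcase_abs (g1 t * g1 t + g2 t * g2 t - (g1 0 * g1 0 + g2 0 * g2 0))) as [Hn|Hn]; [rewrite Rabs_left in E by lra | rewrite Rabs_right in E by lra]; lra. }
  assert (NR : forall t, 0 <= t <= 1 -> pnorm (g1 t, g2 t) = r).
  { intros t Ht. unfold pnorm, pdot; cbn [fst snd]. rewrite NC by exact Ht.
    apply sqrt_square. unfold r, pnorm; apply sqrt_pos. }
  assert (rpos : 0 < r) by lra.
  assert (G1 : forall t, 0 <= t <= 1 -> fst (Yfield (g1 t, g2 t)) = 4 * (g2 t)^2 / r^2).
  { intros t Ht. rewrite Y_fst; cbn [fst snd]. rewrite NR by exact Ht. field. lra. }
  assert (G2 : forall t, 0 <= t <= 1 -> snd (Yfield (g1 t, g2 t)) = - 4 * g1 t * g2 t / r^2).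
  { intros t Ht. rewrite Y_snd; cbn [fst snd]. rewrite NR by exact Ht. field. lra. }
  assert (B1 : forall t, 0 <= t <= 1 -> Rabs (g1 t) <= r /\ Rabs (g2 t) <= r).
  { intros t Ht. pose proof (NC t Ht). split; apply Rabs_le; nra. }
  assert (D1 : forall t, 0 <= t <= 1 -> Rabs (g1 t - x1) <= 4).
  { intros t Ht. rewrite <- H1. destruct (Req_dec t 0) as [->|Ht0]; [rewrite Rminus_diag, Rabs_R0; lra|].
    pose proof (mvt_bound g1 (fun s => fst (Yfield (g1 s, g2 s))) 0 t 4 (fun s => proj1 (Hic s)) ltac:(lra)) as M.
    assert (Rabs (g1 t - g1 0) <= 4 * (t - 0)).
    { apply M. intros s Hs. cbv beta. rewrite G1 by lra. apply div_sq1; [lra|].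
      pose proof (NC s ltac:(lra)). rewrite Rabs_right by nra. nra. }
    nra. }
  assert (D2 : forall t, 0 <= t <= 1 -> Rabs (g2 t - x2) <= 2).
  { intros t Ht. rewrite <- H2. destruct (Req_dec t 0) as [->|Ht0]; [rewrite Rminus_diag, Rabs_R0; lra|].
    pose proof (mvt_bound g2 (fun s => snd (Yfield (g1 s, g2 s))) 0 t 2 (fun s => proj2 (Hic s)) ltac:(lra)) as M.
    assert (Rabs (g2 t - g2 0) <= 2 * (t - 0)).
    { apply M. intros s Hs. cbv beta. rewrite G2 by lra. apply div_sq1; [lra|].
      pose proof (NC s ltac:(lra)). apply Rabs_le. pose proof (pow2_ge_0 (g1 s - g2 s)). pose proof (pow2_ge_0 (g1 s + g2 s)). replace (r^2) with (r*r) by ring. nra. }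
    nra. }
  split.
  - set (F := 4 * x2^2 / r^2).
    assert (Dv : forall s, derivable_pt_lim (fun s => g1 s - s * F) s (fst (Yfield (g1 s, g2 s)) - F)).
    { intro s. exact (derivable_pt_lim_minus g1 (fun s => s * F) s _ _ (proj1 (Hic s)) (lin_deriv F s)). }
    pose proof (mvt_bound _ _ 0 1 (16 / r) Dv ltac:(lra)) as M.
    replace (g1 1 - (x1 + F)) with ((g1 1 - 1 * F) - (g1 0 - 0 * F)) by (rewrite H1; ring).
    replace (16 / r) with (16 / r * (1 - 0)) by ring.
    apply M. intros s Hs. rewrite G1 by lra. unfold F.
    replace (4 * g2 s ^ 2 / r ^ 2 - 4 * x2 ^ 2 / r ^ 2) with (4 * ((g2 s - x2) * (g2 s + x2)) / r^2) by (field; lra).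
    apply div_sq2; [lra|]. rewrite !Rabs_mult, (Rabs_right 4) by lra.
    pose proof (D2 s Hs). destruct (B1 s Hs) as [_ b2]. destruct (B1 0 ltac:(lra)) as [_ b0]. rewrite H2 in b0.
    pose proof (Rabs_triang (g2 s) x2).
    pose proof (Rabs_pos (g2 s - x2)). pose proof (Rabs_pos (g2 s + x2)). nra.
  - set (F := - 4 * x1 * x2 / r^2).
    assert (Dv : forall s, derivable_pt_lim (fun s => g2 s - s * F) s (snd (Yfield (g1 s, g2 s)) - F)).
    { intro s. exact (derivable_pt_lim_minus g2 (fun s => s * F) s _ _ (proj2 (Hic s)) (lin_deriv F s)). }
    pose proof (mvt_bound _ _ 0 1 (24 / r) Dv ltac:(lra)) as M.
    replace (g2 1 - (x2 - 4 * x1 * x2 / r^2)) with ((g2 1 - 1 * F) - (g2 0 - 0 * F)) by (rewrite H2; unfold F; field; lra).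
    replace (24 / r) with (24 / r * (1 - 0)) by ring.
    apply M. intros s Hs. rewrite G2 by lra. unfold F.
    replace (- 4 * g1 s * g2 s / r ^ 2 - - 4 * x1 * x2 / r ^ 2) with (-4 * ((g1 s - x1) * g2 s + x1 * (g2 s - x2)) / r^2) by (field; lra).
    apply div_sq2; [lra|]. rewrite Rabs_mult, (Rabs_left (-4)) by lra.
    pose proof (D1 s Hs). pose proof (D2 s Hs). destruct (B1 s Hs) as [_ b2]. destruct (B1 0 ltac:(lra)) as [b0 _]. rewrite H1 in b0.
    pose proof (Rabs_triang ((g1 s - x1) * g2 s) (x1 * (g2 s - x2))) as T.
    rewrite !Rabs_mult in T.
    pose proof (Rabs_pos (g1 s - x1)). pose proof (Rabs_pos (g2 s - x2)). pose proof (Rabs_pos x1). pose proof (Rabs_pos (g2 s)). nra.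
Qed.

Lemma pnorm_le (a b : R) : pnorm (a, b) <= Rabs a + Rabs b.
Proof.
  unfold pnorm, pdot; cbn [fst snd].
  pose proof (Rabs_pos a). pose proof (Rabs_pos b).
  rewrite <- (sqrt_square (Rabs a + Rabs b)) by lra.
  apply sqrt_le_1_alt.
  assert (Rabs a * Rabs a = a * a) by (rewrite <- Rabs_mult; apply Rabs_right; nra).
  assert (Rabs b * Rabs b = b * b) by (rewrite <- Rabs_mult; apply Rabs_right; nra).
  nra.
Qed.

(* phi_1(x) = gamma(1), where gamma is the integral curve of Y with gamma(0) = x. *)
Theorem corollary4p14 :
  exists R0 C5 : R,
    forall x : pt, 1 < pnorm x -> R0 <= pnorm x ->
      forall g1 g2 : R -> R,
        g1 0 = fst x -> g2 0 = snd x -> integral_curve Yfield g1 g2 ->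
        pnorm (psub (P2 x) (g1 1, g2 1)) <= C5 / pnorm x.
Proof.
  exists 10, 148.
  intros [x1 x2] Hr1 HR g1 g2 H1 H2 Hic. cbn [fst snd] in H1, H2.
  destruct (flow_bound x1 x2 g1 g2 ltac:(lra) H1 H2 Hic) as [F1 F2].
  set (r := pnorm (x1, x2)) in *.
  assert (Hr2 : r * r = x1*x1 + x2*x2).
  { unfold r, pnorm, pdot; simpl. apply sqrt_sqrt. nra. }
  assert (Huv : (x1/r)^2 + (x2/r)^2 = 1).
  { replace ((x1/r)^2 + (x2/r)^2) with ((x1*x1+x2*x2)/(r*r)) by (field; lra).
    rewrite <- Hr2. field. lra. }
  destruct (P2_bound r (x1/r) (x2/r) HR Huv) as [P1 P2'].
  replace (r * (x1/r)) with x1 in P1, P2' by (field; lra).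
  replace (r * (x2/r)) with x2 in P1, P2' by (field; lra).
  replace (x1 + 4 * (x2/r)^2) with (x1 + 4 * x2^2 / r^2) in P1 by (field; lra).
  replace (x2 - 4 * (x1/r) * (x2/r)) with (x2 - 4 * x1 * x2 / r^2) in P2' by (field; lra).
  unfold psub; cbn [fst snd].
  eapply Rle_trans; [apply pnorm_le|].
  set (T1 := x1 + 4 * x2^2 / r^2) in *.
  set (T2 := x2 - 4 * x1 * x2 / r^2) in *.
  replace (fst (P2 (x1, x2)) - g1 1) with ((fst (P2 (x1, x2)) - T1) - (g1 1 - T1)) by ring.
  replace (snd (P2 (x1, x2)) - g2 1) with ((snd (P2 (x1, x2)) - T2) - (g2 1 - T2)) by ring.
  pose proof (Rabs_triang (fst (P2 (x1, x2)) - T1) (- (g1 1 - T1))).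
  pose proof (Rabs_triang (snd (P2 (x1, x2)) - T2) (- (g2 1 - T2))).
  rewrite Rabs_Ropp in *.
  replace (148 / r) with (54/r + 16/r + 54/r + 24/r) by (field; lra).
  change (Rabs (fst (P2 (x1,x2)) - T1 - (g1 1 - T1))) with (Rabs (fst (P2 (x1,x2)) - T1 + - (g1 1 - T1))). change (Rabs (snd (P2 (x1,x2)) - T2 - (g2 1 - T2))) with (Rabs (snd (P2 (x1,x2)) - T2 + - (g2 1 - T2))). lra.
Qed.
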